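(* Let $c$ be a real number with $0<c\leq 1/2$. There exists a sequence $(a_p)$ indexed by the prime numbers $p$, with each $a_p$ an integer satisfying $0\leq a_p<p$, such that for almost every $x\in[0,1]$ (with respect to Lebesgue measure), the set of primes $p$ with $$\Bigl|x-\frac{a_p}{p}\Bigr|\leq \frac{c}{p}$$ is infinite. *)

(* Defs.v *)
From HB Require Import structures.
From mathcomp Require Import all_boot all_order all_algebra.
From mathcomp Require Import all_classical all_reals all_analysis.

(* Main.v *)
Require Import Defs.
From HB Require Import structures.
From mathcomp Require Import all_boot all_order all_algebra.
From mathcomp Require Import all_classical all_reals all_analysis.
From mathcomp Require Import zify ring lra.
Import Order.TTheory GRing.Theory Num.Theory.
Lemma has_le_sum (P : pred nat) s : (has P s : nat) <= \sum_(x <- s) P x.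
Proof.
elim: s => [|x s IH] //=; rewrite big_cons.
by case: (P x) => //=; rewrite add0n.
Qed.

Definition bigp S N i := has (fun p => prime p && (p %| i)) (index_iota S N.+1).

Lemma count_big S N :
  \sum_(1 <= i < N.+1) bigp S N i <= \sum_(S <= p < N.+1 | prime p) N %/ p.
Proof.
apply: (@leq_trans (\sum_(1 <= i < N.+1) \sum_(S <= p < N.+1 | prime p) (p %| i))).
  apply: leq_sum => i _; apply: leq_trans (has_le_sum _ _) _.
  by rewrite [X in _ <= X]big_mkcond /=; apply: eq_leq; apply: eq_bigr => p _; case: (prime p).
rewrite exchange_big_nat /=; apply: eq_leq; apply: eq_bigr => p _.
by rewrite divn_count_dvd.
Qed.

Lemma logn_le_K p i K : 0 < i -> i <= 2 ^ K -> logn p i <= K.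
Proof.
move=> i0 iK; have [pp|np] := boolP (prime p); last by rewrite /logn (negPf np).
have h1 : p ^ logn p i <= 2 ^ K.
  by apply: leq_trans iK; apply: dvdn_leq => //; exact: pfactor_dvdnn.
have h2 : 2 ^ logn p i <= p ^ logn p i.
  case: (logn p i) => [|l] //; rewrite leq_exp2r //; exact: prime_gt1.
by rewrite -(@leq_exp2l 2) //; apply: leq_trans h2 h1.
Qed.

Lemma sum_from1 n (F : nat -> nat) :
  \sum_(1 <= i < n.+1) F i = \sum_(i < n.+1 | 0 < i) F i.
Proof.
rewrite -(big_mkord (fun i => 0 < i)) [RHS]big_mkcond [RHS]big_ltn //= add0n.
by apply: eq_big_nat => i /andP[h _]; rewrite h.
Qed.

Lemma count_smooth S K :
  \sum_(1 <= i < (2 ^ K).+1) ~~ bigp S (2 ^ K) i <= K.+1 ^ S.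
Proof.
set N := 2 ^ K.
rewrite sum_from1.
have -> : \sum_(i < N.+1 | 0 < i) (~~ bigp S N i : nat) = \sum_(i < N.+1 | (0 < i) && ~~ bigp S N i) 1.
  by rewrite [RHS]big_mkcondr /=; apply: eq_bigr => i _; case: (bigp S N i).
rewrite sum1dep_card.
pose f (i : 'I_N.+1) : {ffun 'I_S -> 'I_K.+1} := [ffun p : 'I_S => inord (logn p i)].
rewrite -(@card_in_imset _ _ f); last first.
  move=> i j; rewrite !inE => /andP[i0 bi] /andP[j0 bj] fij.
  apply: val_inj; apply: eqn_from_log => // p.
  have [pS|pS] := ltnP p S.
    have := congr1 (fun g : {ffun 'I_S -> 'I_K.+1} => val (g (Ordinal pS))) fij.
    rewrite /f !ffunE /= !inordK //; apply: logn_le_K => //; rewrite -ltnS; exact: ltn_ord.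
  have z : forall k : 'I_N.+1, 0 < k -> ~~ bigp S N k -> logn p k = 0.
    move=> k k0 bk; apply/eqP; rewrite eqn0Ngt logn_gt0 mem_primes k0 /=.
    apply/negP => /andP[pp pk]; move/negP: bk; apply; apply/hasP; exists p; last by rewrite pp.
    rewrite mem_index_iota pS /= ltnS; apply: leq_trans (dvdn_leq k0 pk) _; rewrite -ltnS; exact: ltn_ord.
  by rewrite !z.
apply: leq_trans (max_card _) _.
by rewrite card_ffun !card_ord.
Qed.

Lemma exp_mono m n e : m <= n -> m ^ e <= n ^ e.
Proof. by move=> h; elim: e => // e IH; rewrite !expnS leq_mul. Qed.

Lemma K_bound S : 2 * (2 ^ (2 * S + 2)).+1 ^ S <= 2 ^ (2 ^ (2 * S + 2)).
Proof.
set K := 2 ^ (2 * S + 2).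
have K1 : 1 <= K by rewrite expn_gt0.
have h1 : K.+1 ^ S <= (2 * K) ^ S by apply: exp_mono; lia.
have h2 : (2 * K) ^ S = 2 ^ (S + (2 * S + 2) * S) by rewrite expnMn expnD expnM.
have h3 : 2 * K.+1 ^ S <= 2 ^ (1 + S + (2 * S + 2) * S).
  by rewrite -addnA expnD expn1 leq_mul2l /= -h2.
apply: leq_trans h3 _; rewrite leq_exp2l //.
have a1 : S < 2 ^ S := ltn_expl S (isT : 1 < 2).
have a2 : K = 2 ^ S * 2 ^ S * 4.
  by rewrite /K (_ : 4 = 2 ^ 2) // -!expnD; f_equal; lia.
rewrite a2; set a := 2 ^ S in a1 *; nia.
Qed.

Local Open Scope ring_scope.
Lemma natdiv_le (R : realType) N p : (0 < p)%N -> ((N %/ p)%:R : R) <= N%:R / p%:R.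
Proof.
move=> p0; rewrite ler_pdivlMr ?ltr0n // -natrM ler_nat; exact: leq_divM.
Qed.

Lemma prime_sum_half (R : realType) S :
  exists E, 2^-1 <= \sum_(S <= p < E | prime p) (p%:R : R)^-1.
Proof.
apply/not_existsP => H.
have H' : forall E, \sum_(S <= p < E | prime p) (p%:R : R)^-1 < 2^-1.
  by move=> E; rewrite ltNge; apply/negP => h; apply: (H E).
set K := (2 ^ (2 * S + 2))%N; set N := (2 ^ K)%N.
have cnt : (N <= \sum_(S <= p < N.+1 | prime p) N %/ p + K.+1 ^ S)%N.
  have e1 : N = (\sum_(1 <= i < N.+1) (bigp S N i + ~~ bigp S N i))%N.
    rewrite (eq_bigr (fun _ => 1%N)); last by move=> i _; case: (bigp S N i).
    by rewrite sum_nat_const_nat subn1 muln1.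
  rewrite {1}e1 big_split /=; apply: leq_add; first exact: count_big.
  exact: count_smooth.
have rl : (N%:R : R) < N%:R / 2 + (K.+1 ^ S)%:R.
  apply: le_lt_trans (_ : _ <= ((\sum_(S <= p < N.+1 | prime p) N %/ p)%N)%:R + (K.+1 ^ S)%:R) _.
    by rewrite -natrD ler_nat.
  rewrite ltrD2r natr_sum.
  apply: le_lt_trans (_ : _ <= \sum_(S <= p < N.+1 | prime p) N%:R * (p%:R : R)^-1) _.
    apply: ler_sum => p pp; apply: natdiv_le; exact: prime_gt0.
  rewrite -mulr_sumr ltr_pM2l; first exact: H'.
  by rewrite ltr0n expn_gt0.
have : (N < 2 * K.+1 ^ S)%N.
  rewrite -(ltr_nat R) natrM; move: rl; rewrite -ltrBlDl.
  have -> : (N%:R : R) - N%:R / 2 = N%:R / 2 by field.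
  by rewrite ltr_pdivrMr // mulrC.
by rewrite ltnNge K_bound.
Qed.

Lemma prime_sum_large (R : realType) (L : nat) S :
  exists E, (S <= E)%N /\ L%:R / 2 <= \sum_(S <= p < E | prime p) (p%:R : R)^-1.
Proof.
elim: L S => [|L IH] S.
  by exists S; rewrite big_geq // mul0r.
have [E1 [SE1 h1]] := IH S.
have [E2 h2] := prime_sum_half R E1.
have E12 : (E1 <= E2)%N.
  rewrite leqNgt; apply/negP => lt; move: h2; rewrite big_geq ?(ltnW lt) //.
  by rewrite leNgt invr_gt0 ltr0n.
exists E2; split; first exact: leq_trans SE1 E12.
rewrite (big_cat_nat SE1 E12) /= -natr1 mulrDl.
by apply: lerD; rewrite // mul1r.
Qed.

Section Sweep.
Variables (R : realType) (c : R).
Hypothesis hc0 : 0 < c.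
Hypothesis hc1 : c <= 2^-1.

Definition cover (a : nat -> nat) S E (x : R) := exists p,
  [/\ (S <= p < E)%N, prime p & `|x - (a p)%:R / p%:R| <= c / p%:R].
Definition inL (L : seq (R * R)) x := has (fun g => (g.1 <= x <= g.2)) L.
Definition total (L : seq (R * R)) := \sum_(g <- L) (g.2 - g.1).
Definition okL (L : seq (R * R)) :=
  all (fun g => (0 <= g.1) && (g.1 <= g.2) && (g.2 <= 1)) L.
Definition aok (a : nat -> nat) := forall p, prime p -> (a p < p)%N.

Lemma cover_ext a a' S E S' E' x : (S' <= S)%N -> (E <= E')%N ->
  (forall p, (S <= p < E)%N -> a p = a' p) -> cover a S E x -> cover a' S' E' x.
Proof.
move=> hS hE ha [p [/andP[p1 p2] pp hx]]; exists p; split => //.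
  by rewrite (leq_trans hS p1) (leq_trans p2 hE).
by rewrite -ha // p1 p2.
Qed.

Lemma sweep n : forall S t v, (0 < S)%N -> 0 <= t -> t <= v -> v <= 1 ->
  v - t <= \sum_(S <= p < S + n | prime p) 2 * c / p%:R ->
  exists a L, [/\ aok a, okL L,
    total L <= (v - t) / (1 + 2 * c) + (1 + 2 * c) / S%:R &
    forall x, t <= x <= v -> cover a S (S + n) x \/ inL L x].
Proof.
have D0 : 0 < 1 + 2 * c by have := hc0; lra.
elim: n => [|n IH] S t v S0 t0 tv v1 hsum.
  rewrite addn0 big_geq // in hsum.
  exists (fun _ => 0%N), [:: (t, v)]; split.
  - by move=> p pp; exact: prime_gt0.
  - by rewrite /okL /= t0 tv v1.
  - rewrite /total big_seq1 /=; apply: le_trans hsum _.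
    by apply: addr_ge0; apply: divr_ge0; rewrite ?subr_ge0 // ltW.
  - by move=> x hx; right; rewrite /inL /= hx.
have SS : (S < S + n.+1)%N by lia.
rewrite big_ltn_cond // -addSnnS in hsum.
have hS : 0 < (S%:R : R) by rewrite ltr0n.
have hS1 : (1 + 2 * c) / S.+1%:R <= (1 + 2 * c) / S%:R.
  by rewrite ler_pM2l // lef_pV2 ?posrE ?ltr0n // ler_nat.
case: (boolP (prime S)) => pS in hsum *; last first.
  have [a [L [aa oL tL cL]]] := IH S.+1 t v isT t0 tv v1 hsum.
  exists a, L; split => //.
    by apply: le_trans tL _; rewrite lerD2l.
  move=> x hx; case: (cL x hx) => [h|h]; last by right.
  left; apply: cover_ext h => //; by rewrite addSnnS.
set w := (S%:R : R)^-1.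
have w0 : 0 < w by rewrite invr_gt0.
have Sw : S%:R * w = 1 by rewrite mulfV // gt_eqF.
have y0 : 0 <= S%:R * t + c by apply: addr_ge0; [apply: mulr_ge0; rewrite // ltW | rewrite ltW].
have /andP[k0 k1] := trunc_itv y0.
set k := Num.Def.trunc _ in k0 k1.
set A := (k.+1%:R : R).
have AE : A = k%:R + 1 by rewrite /A -natr1.
set s := (A - c) * w; set e := (A + c) * w.
have eE : e = s + 2 * c * w by rewrite /e /s; ring.
have hts : t < s.
  by rewrite /s ltr_pdivlMr // mulrC; lra.
have hs1 : s - t <= w.
  suff : s <= t + w by lra.
  rewrite /s ler_pdivrMr // mulrDl (mulrC w) Sw (mulrC t); lra.
rewrite /= in hsum.
have hsw : 2 * c / S%:R = 2 * c * w by [].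
case: (ltrP v e) => ve.
  exists (fun _ => 0%N), [:: (t, v)]; split.
  - by move=> p pp; exact: prime_gt0.
  - by rewrite /okL /= t0 tv v1.
  - rewrite /total big_seq1 /=.
    have : 0 <= (v - t) / (1 + 2 * c) by apply: divr_ge0; rewrite ?subr_ge0 // ltW.
    have : (1 + 2 * c) / S%:R = w + 2 * c * w by rewrite /w; ring.
    lra.
  - by move=> x hx; right; rewrite /inL /= hx.
have cw : 0 < c * w by apply: mulr_gt0.
have e0 : 0 <= e by lra.
have hsum' : v - e <= \sum_(S.+1 <= p < S.+1 + n | prime p) 2 * c / p%:R.
  by move: hsum; rewrite hsw; lra.
have [a [L [aa oL tL cL]]] := IH S.+1 e v isT e0 ve v1 hsum'.
exists (fun p => if p == S then k.+1 else a p), ((t, s) :: L); split.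
- move=> p pp; case: eqP => [->|_]; last exact: aa.
  rewrite -(ltr_nat R) -/A.
  have : S%:R * e = A + c by rewrite /e mulrC -mulrA (mulrC w) Sw mulr1.
  have : S%:R * e <= S%:R * 1 by rewrite ler_pM2l //; lra.
  have := hc0; lra.
- by rewrite /okL /= t0 (ltW hts) /=; apply/andP; split => //; lra.
- rewrite /total big_cons /= -/(total L).
  have key1 : (s - t) * (1 + 2 * c) <= e - t.
    have := hc0; nra.
  have key2 : s - t <= (e - t) / (1 + 2 * c) by rewrite ler_pdivlMr.
  have key3 : (v - t) / (1 + 2 * c) = (e - t) / (1 + 2 * c) + (v - e) / (1 + 2 * c).
    by rewrite -mulrDl; congr (_ * _); ring.
  rewrite key3 -addrA (addrC ((e - t) / _)) addrA (addrC (s - t)) -addrA.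
  apply: le_trans (lerD tL key2) _.
  rewrite -addrA lerD2l addrC lerD2l; exact: hS1.
- move=> x /andP[tx xv].
  case: (lerP x s) => xs.
    by right; rewrite /inL /= tx xs.
  case: (lerP x e) => xe.
    left; exists S; split => //; first by rewrite leqnn SS.
    rewrite eqxx -/A.
    have -> : A / S%:R = s + c * w by rewrite /s /w; ring.
    rewrite ler_norml; have -> : c / S%:R = c * w by [].
    lra.
  case: (cL x); first by rewrite xv ltW.
    move=> h; left; apply: cover_ext h => //; first by rewrite addSnnS.
    by move=> p /andP[h1 _]; rewrite (gtn_eqF h1).
  by move=> h; right; rewrite /inL /=; move: h; rewrite /inL => ->; rewrite orbT.
Qed.

Let D0 : 0 < 1 + 2 * c. Proof. by have := hc0; lra. Qed.

Lemma gap S u v : (0 < S)%N -> 0 <= u -> u <= v -> v <= 1 ->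
  exists E a L, [/\ (S <= E)%N, aok a, okL L,
    total L <= (v - u) / (1 + 2 * c) + (1 + 2 * c) / S%:R &
    forall x, u <= x <= v -> cover a S E x \/ inL L x].
Proof.
move=> S0 u0 uv v1.
have [E [SE hE]] := prime_sum_large R (Num.Def.trunc c^-1).+1 S.
have hs : v - u <= \sum_(S <= p < S + (E - S) | prime p) 2 * c / p%:R.
  rewrite subnKC //.
  have -> : \sum_(S <= p < E | prime p) 2 * c / (p%:R : R) =
            2 * c * \sum_(S <= p < E | prime p) (p%:R : R)^-1 by rewrite mulr_sumr.
  have ci : 0 <= c^-1 by rewrite invr_ge0 ltW.
  have /andP[_ k1] := trunc_itv ci.
  have h1 : 1 <= c * (Num.Def.trunc c^-1).+1%:R.
    by have := ler_wpM2l (ltW hc0) (ltW k1); rewrite mulfV // gt_eqF.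
  have h2 : 2 * c * ((Num.Def.trunc c^-1).+1%:R / 2) = c * (Num.Def.trunc c^-1).+1%:R.
    by field.
  apply: le_trans (_ : _ <= 1) _; first by lra.
  apply: le_trans h1 _; rewrite -h2.
  by rewrite ler_pM2l ?mulr_gt0 //.
have [a [L [aa oL tL cL]]] := sweep (E - S) S u v S0 u0 uv v1 hs.
exists E, a, L; split => // x hx; rewrite -(subnKC SE); exact: cL.
Qed.


Lemma inL_cat L1 L2 x : inL (L1 ++ L2) x = inL L1 x || inL L2 x.
Proof. by rewrite /inL has_cat. Qed.

Lemma total_cat L1 L2 : total (L1 ++ L2) = total L1 + total L2.
Proof. by rewrite /total big_cat. Qed.

Lemma pass L : forall S d, 0 < d -> (0 < S)%N -> okL L ->
  exists E a L', [/\ (S <= E)%N, aok a, okL L',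
    total L' <= total L / (1 + 2 * c) + d &
    forall x, inL L x -> cover a S E x \/ inL L' x].
Proof.
elim: L => [|g L IH] S d d0 S0 oL.
  exists S, (fun _ => 0%N), [::]; split => //.
  - by move=> p pp; exact: prime_gt0.
  - by rewrite /total !big_nil mul0r add0r ltW.
have /andP[/andP[/andP[g1 g2] g3] oL'] : _ := oL.
set S1 := maxn S (Num.Def.trunc (2 * (1 + 2 * c) / d)).+1.
have S10 : (0 < S1)%N by rewrite leq_max S0.
have hS1 : (1 + 2 * c) / S1%:R <= d / 2.
  have q0 : 0 <= 2 * (1 + 2 * c) / d by apply: divr_ge0; [have := D0; lra | exact: ltW].
  have /andP[_ k1] := trunc_itv q0.
  have k2 : 2 * (1 + 2 * c) / d < S1%:R.
    by apply: lt_le_trans k1 _; rewrite ler_nat leq_maxr.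
  have S1p : 0 < (S1%:R : R) by rewrite ltr0n.
  rewrite ler_pdivrMr //.
  move: k2; rewrite ltr_pdivrMr // => k2.
  lra.
have [E1 [a1 [L1 [SE1 a1k oL1 tL1 cL1]]]] := gap S1 g.1 g.2 S10 g1 g2 g3.
have E10 : (0 < E1)%N by apply: leq_trans SE1.
have [E [a2 [L2 [SE a2k oL2 tL2 cL2]]]] := IH E1 (d / 2) (divr_gt0 d0 (ltr0Sn R 1)) E10 oL'.
have SS1 : (S <= S1)%N by rewrite leq_maxl.
exists E, (fun p => if (p < E1)%N then a1 p else a2 p), (L1 ++ L2); split.
- exact: leq_trans SS1 (leq_trans SE1 SE).
- by move=> p pp; case: ifP => _; [exact: a1k | exact: a2k].
- by rewrite /okL all_cat; apply/andP; split; [exact: oL1 | exact: oL2].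
- have tg : total (g :: L) = (g.2 - g.1) + total L by rewrite /total big_cons.
  rewrite total_cat tg mulrDl; apply: le_trans (lerD tL1 tL2) _.
  rewrite -!addrA lerD2l; move: hS1.
  generalize (total L / (1 + 2 * c)) ((1 + 2 * c) / S1%:R).
  move=> Y Z; lra.
- move=> x hx0; have : (g.1 <= x <= g.2) || inL L x by move: hx0; rewrite /inL /=.
  case/orP => hx.
    case: (cL1 x hx) => [h|h].
      left; apply: (cover_ext _ _ _ _ _ _ _ SS1 SE _ h).
      by move=> p /andP[_ ->].
    by right; rewrite inL_cat h.
  case: (cL2 x hx) => [h|h].
    left; apply: (cover_ext _ _ _ _ _ _ _ (leq_trans SS1 SE1) (leqnn E) _ h).
    by move=> p /andP[h1 _]; rewrite ltnNge h1.
  by right; rewrite inL_cat h orbT.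
Qed.


Lemma bernoulli (x : R) n : 0 <= x -> 1 + n%:R * x <= (1 + x) ^+ n.
Proof.
move=> x0; elim: n => [|n IH]; first by rewrite mul0r addr0 expr0.
rewrite exprSr -natr1 mulrDl mul1r.
have h : 0 <= n%:R * x by apply: mulr_ge0.
have : (1 + n%:R * x) * (1 + x) <= (1 + x) ^+ n * (1 + x) by rewrite ler_pM2r //; lra.
nra.
Qed.

Lemma block n : forall S d, 0 < d -> (0 < S)%N ->
  exists E a L, [/\ (S <= E)%N, aok a, okL L,
    total L <= ((1 + 2 * c)^-1) ^+ n + n%:R * d &
    forall x, 0 <= x <= 1 -> cover a S E x \/ inL L x].
Proof.
have r0 : 0 < (1 + 2 * c)^-1 by rewrite invr_gt0 D0.
have r1 : (1 + 2 * c)^-1 <= 1 by rewrite invf_le1 ?D0 //; have := hc0; lra.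
elim: n => [|n IH] S d d0 S0.
  exists S, (fun _ => 0%N), [:: (0, 1)]; split => //.
  - by move=> p pp; exact: prime_gt0.
  - by rewrite /okL /= lexx ler01 lexx.
  - by rewrite /total big_seq1 /= subr0 expr0 mul0r addr0.
  - by move=> x hx; right; rewrite /inL /= hx.
have [E1 [a1 [L1 [SE1 a1k oL1 tL1 cL1]]]] := IH S d d0 S0.
have E10 : (0 < E1)%N by apply: leq_trans SE1.
have [E [a2 [L2 [SE a2k oL2 tL2 cL2]]]] := pass L1 E1 d d0 E10 oL1.
exists E, (fun p => if (p < E1)%N then a1 p else a2 p), L2; split => //.
- exact: leq_trans SE1 SE.
- by move=> p pp; case: ifP => _; [exact: a1k | exact: a2k].
- apply: le_trans tL2 _.
  set r := (1 + 2 * c)^-1 in r0 r1 *.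
  have h1 : total L1 * r <= (r ^+ n + n%:R * d) * r by rewrite ler_pM2r.
  have h2 : n%:R * d * r <= n%:R * d.
    by rewrite ler_piMr // mulr_ge0 // ltW.
  rewrite exprSr -natr1 mulrDl mul1r; move: h1 h2; rewrite mulrDl.
  generalize (total L1 * r) (r ^+ n * r) (n%:R * d * r) (n%:R * d) => X Y Z W.
  lra.
- move=> x hx; case: (cL1 x hx) => [h|h].
    left; apply: (cover_ext _ _ _ _ _ _ _ (leqnn S) SE _ h).
    by move=> p /andP[_ ->].
  case: (cL2 x h) => [h'|h']; last by right.
  left; apply: (cover_ext _ _ _ _ _ _ _ SE1 (leqnn E) _ h').
  by move=> p /andP[h1 _]; rewrite ltnNge h1.
Qed.

Lemma block_eps S e : 0 < e -> (0 < S)%N ->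
  exists E a L, [/\ (S < E)%N, aok a, okL L, total L <= e &
    forall x, 0 <= x <= 1 -> cover a S E x \/ inL L x].
Proof.
move=> e0 S0.
set n := (Num.Def.trunc (c * e)^-1).+1.
have n0 : 0 < (n%:R : R) by rewrite ltr0n.
have [E [a [L [SE ak oL tL cL]]]] := block n S (e / (2 * n%:R)) (divr_gt0 e0 (mulr_gt0 (ltr0Sn R 1) n0)) S0.
exists E.+1, a, L; split => //.
- apply: le_trans tL _.
  have hn : n%:R * (e / (2 * n%:R)) = e / 2 by field; rewrite gt_eqF.
  rewrite hn.
  suff : ((1 + 2 * c)^-1) ^+ n <= e / 2 by lra.
  have ce : 0 < c * e by apply: mulr_gt0.
  have ci : 0 < (c * e)^-1 by rewrite invr_gt0.
  have /andP[_ k1] := trunc_itv (ltW ci).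
  have k2 : 1 < c * e * n%:R.
    have h : c * e * (c * e)^-1 = 1 by rewrite mulfV // (negbT (gt_eqF ce)).
    move: k1 h ce; rewrite -/n; generalize (c * e)^-1 => iv; nra.
  have b := bernoulli (2 * c) n (ltW (mulr_gt0 (ltr0Sn R 1) hc0)).
  have Dn : 0 < (1 + 2 * c) ^+ n by apply: exprn_gt0; exact: D0.
  rewrite exprVn -[e / 2]invf_div lef_pV2 ?posrE ?divr_gt0 //.
  apply: le_trans b.
  have : 2 / e <= 2 * c * n%:R.
    rewrite ler_pdivrMr //; lra.
  have := hc0; nra.
- move=> x hx; case: (cL x hx) => [h|h]; last by right.
  by left; apply: (cover_ext _ _ _ _ _ _ _ (leqnn S) (leqnSn E) _ h).
Qed.

End Sweep.

Local Open Scope classical_set_scope.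

Lemma inL_cons (R : realType) (g : R * R) L :
  [set x : R | inL R (g :: L) x] = [set` `[g.1, g.2]%R] `|` [set x | inL R L x].
Proof.
apply/seteqP; split => x /=.
  by rewrite /inL /= => /orP[h|h]; [left; rewrite in_itv /= | right].
rewrite /inL /=; case => [|->]; last by rewrite orbT.
by rewrite in_itv /= => ->.
Qed.

Lemma inL_meas (R : realType) L : @measurable _ (measurableTypeR R) [set x : R | inL R L x].
Proof.
elim: L => [|g L IH].
  by rewrite (_ : [set x | inL R [::] x] = set0) //; apply/seteqP; split => x.
by rewrite inL_cons; apply: measurableU => //; exact: measurable_itv.
Qed.

Lemma inL_mu (R : realType) L : okL R L ->
  (lebesgue_measure [set x : R | inL R L x] <= (total R L)%:E)%E.
Proof.
elim: L => [|g L IH].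
  rewrite (_ : [set x | inL R [::] x] = set0); last by apply/seteqP; split => x.
  by rewrite measure0 /total big_nil.
move=> /andP[/andP[/andP[g1 g2] g3] oL].
rewrite inL_cons.
have h := measureU2 (@lebesgue_measure R) (measurable_itv `[g.1, g.2]%R) (inL_meas R L).
apply: le_trans h _.
rewrite /total big_cons -/(total R L) EFinD; apply: leeD; last exact: IH.
have := lebesgue_measure_itv `[g.1, g.2]%R; rewrite /= => ->.
case: ifP => _; first by rewrite -EFinD.
by rewrite lee_fin subr_ge0.
Qed.

Local Open Scope classical_set_scope.
Local Open Scope ring_scope.

(* The sequence (a_p) indexed by primes is a function a : nat -> nat whose
   values at non-primes are irrelevant. *)
Theorem theorem1p1 (R : realType) (c : R) (hc0 : 0 < c) (hc1 : c <= 2^-1) :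
  exists a : nat -> nat,
    (forall p : nat, prime p -> (a p < p)%N) /\
    {ae (@lebesgue_measure R), forall x : R, x \in `[0, 1] ->
       ~ finite_set [set p : nat | prime p /\
                       `| x - (a p)%:R / p%:R | <= c / p%:R]}.
Proof.
pose P (Sk : nat * nat) (t : nat * (nat -> nat) * seq (R * R)) :=
  (0 < Sk.1)%N -> [/\ (Sk.1 < t.1.1)%N, aok t.1.2, okL R t.2,
    total R t.2 <= (Sk.2.+1%:R)^-1 &
    forall x : R, 0 <= x <= 1 -> cover R c t.1.2 Sk.1 t.1.1 x \/ inL R t.2 x].
have ex : forall Sk, exists t, P Sk t.
  move=> [S k]; case: (posnP S) => [->|S0].
    by exists (0%N, (fun _ => 0%N), [::]).
  have kp : 0 < (k.+1%:R : R)^-1 by rewrite invr_gt0 ltr0Sn.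
  have [E [a [L [h1 h2 h3 h4 h5]]]] := block_eps R c hc0 hc1 S _ kp S0.
  by exists (E, a, L).
have [f hf] := choice ex.
pose st := fix st k := if k is k'.+1 then (f (st k', k')).1.1 else 1%N.
have stS : forall k, (0 < st k)%N /\ (st k < st k.+1)%N.
  elim => [|k [IH1 IH2]].
    by split => //; have [] := hf (1%N, 0%N) isT.
  have h0 : (0 < st k.+1)%N by apply: leq_trans IH2.
  by split => //; have [] := hf (st k.+1, k.+1) h0.
have stk : forall k, (k < st k)%N.
  by elim => [|k IH]; [exact: (stS 0%N).1 | exact: leq_ltn_trans IH (stS k).2].
have stmono : forall j k, (j <= k)%N -> (st j <= st k)%N.
  move=> j k; elim: k => [|k IH]; first by rewrite leqn0 => /eqP ->.
  rewrite leq_eqVlt => /orP[/eqP ->//|]; rewrite ltnS => /IH h.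
  exact: leq_trans h (ltnW (stS k).2).
pose ak k := (f (st k, k)).1.2.
pose Lk k := (f (st k, k)).2.
have Hk : forall k, [/\ aok (ak k), okL R (Lk k), total R (Lk k) <= (k.+1%:R)^-1 &
    forall x : R, 0 <= x <= 1 -> cover R c (ak k) (st k) (st k.+1) x \/ inL R (Lk k) x].
  by move=> k; have [] := hf (st k, k) (stS k).1.
pose A := fix A k := if k is k'.+1 then
  (fun p => if (p < st k'.+1)%N then A k' p else ak k'.+1 p) else ak 0%N.
pose a p := A p p.
have Aok : forall k, aok (A k).
  elim => [|k IH]; first by have [] := Hk 0%N.
  move=> p pp /=; case: ifP => _; first exact: IH.
  by have [h _ _ _] := Hk k.+1; exact: h.
have claim1 : forall j k p, (j <= k)%N -> (p < st j.+1)%N -> A k p = A j p.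
  move=> j k p; elim: k => [|k IH]; first by rewrite leqn0 => /eqP ->.
  rewrite leq_eqVlt => /orP[/eqP ->//|]; rewrite ltnS => jk hp.
  have hp' : (p < st k.+1)%N by apply: leq_trans hp (stmono _ _ _).
  rewrite /=; case: ifP => [_|]; first exact: IH.
  move/negbT; rewrite -leqNgt => h.
  by have := leq_ltn_trans h hp'; rewrite ltnn.
have claim2 : forall j p, (st j <= p)%N -> A j p = ak j p.
  by move=> [|j] p //= h; rewrite ltnNge h.
have ablk : forall j p, (st j <= p < st j.+1)%N -> a p = ak j p.
  move=> j p /andP[h1 h2]; rewrite /a (claim1 j) //; last first.
    exact: ltnW (leq_trans (stk j) h1).
  exact: claim2.
exists a; split; first by move=> p pp; exact: Aok.
rewrite nearE /= /almost_everywhere.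
pose U k := [set x : R | inL R (Lk k) x].
pose B N := \bigcap_k U (N + k)%N.
have mB : forall N, @measurable _ (measurableTypeR R) (B N).
  by move=> N; apply: bigcapT_measurable => k; exact: inL_meas.
have nB : forall N, (@lebesgue_measure R).-negligible (B N).
  move=> N; apply/(negligibleP _ (mB N)).
  apply/eqP; rewrite eq_le measure_ge0 andbT; apply/lee_addgt0Pr => e e0; rewrite add0e.
  have ei : 0 <= e^-1 by rewrite invr_ge0 ltW.
  have /andP[_ kk] := truncn_itv ei.
  set k := Num.truncn e^-1 in kk.
  apply: (@le_trans _ _ (lebesgue_measure (U (N + k)%N))).
    apply: le_measure; rewrite ?inE; [exact: mB | exact: inL_meas | exact: bigcap_inf].
  have [_ oL tL _] := Hk (N + k)%N.
  apply: le_trans (inL_mu _ _ oL) _; rewrite lee_fin; apply: le_trans tL _.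
  have h1 : ((N + k).+1%:R : R)^-1 <= (k.+1%:R)^-1.
    by rewrite lef_pV2 ?posrE ?ltr0Sn // ler_nat ltnS leq_addl.
  apply: le_trans h1 _.
  by rewrite -[e]invrK lef_pV2 ?posrE ?invr_gt0 ?ltr0Sn // ltW.
have nU : (@lebesgue_measure R).-negligible (\bigcup_N B N) by apply: negligible_bigcup.
move: nU; apply: negligibleS.
move=> x /= nPx.
case: (pselect (x \in `[0, 1])) => hx; last by exfalso; apply: nPx.
case: (pselect (finite_set [set p | prime p /\ `|x - (a p)%:R / p%:R| <= c / p%:R])) => fin;
  last by exfalso; apply: nPx.
have [s sE] := (finite_seqP _).1 fin.
set n := \max_(i <- s) i.
have bnd : forall p, prime p -> `|x - (a p)%:R / p%:R| <= c / p%:R -> (p <= n)%N.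
  move=> p pp hp.
  have ps : [set` s] p by rewrite -sE.
  exact: (@leq_bigmax_seq _ s xpredT id).
exists n => //; move=> k _; rewrite /U /=.
case: (boolP (inL R (Lk (n + k)%N) x)) => // hn; exfalso.
have [_ _ _ hc] := Hk (n + k)%N.
have x01 : 0 <= x <= 1 by move: hx; rewrite in_itv /=.
case: (hc x x01) => [[p [/andP[p1 p2] pp hp]]|h]; last by rewrite h in hn.
rewrite -(ablk (n + k)%N p) ?p1 ?p2 // in hp.
have := bnd p pp hp; have := stk (n + k)%N; lia.
Qed.
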